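(* Let $n\ge1$ and let $H\subseteq Q_n$ be any set of more than $2^{n-1}$ vertices. Then the subgraph of $Q_n$ induced on $H$ has a vertex of degree at least $\sqrt{n}$; that is, there exists $\beta\in H$ such that $\#\{\gamma\in H:\gamma\text{ and }\beta\text{ differ in exactly one coordinate}\}\ge\sqrt{n}$.
   Context: $Q_n=\{0,1\}^n$ is the boolean cube, viewed as a graph in which two vertices are adjacent iff they differ in exactly one coordinate. *)

(* Defs.v *)
From mathcomp Require Import all_boot.
Set Implicit Arguments. Unset Strict Implicit. Unset Printing Implicit Defensive.

Definition cube (n : nat) := {ffun 'I_n -> bool}.

Definition cube_adj (n : nat) (x y : cube n) : bool :=
  #|[set i : 'I_n | x i != y i]| == 1.

Definition ind_deg (n : nat) (H : {set cube n}) (b : cube n) : nat :=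
  #|[set g in H | cube_adj b g]|.

(* Main.v *)
Require Import Defs.
From mathcomp Require Import all_boot.
From HB Require Import structures.
From mathcomp Require Import all_order all_algebra.
From mathcomp Require Import ring lra zify realalg.
Set Implicit Arguments. Unset Strict Implicit. Unset Printing Implicit Defensive.
Import Order.TTheory GRing.Theory Num.Theory.

Definition flip n (x : cube n) (i : 'I_n) : cube n :=
  [ffun j => if j == i then ~~ x j else x j].

Lemma flipE n (x : cube n) i j : flip x i j = if j == i then ~~ x j else x j.
Proof. by rewrite ffunE. Qed.

Lemma flipK n (i : 'I_n) : involutive (fun x : cube n => flip x i).
Proof. by move=> x; apply/ffunP=> j; rewrite !flipE; case: eqP => // _; rewrite negbK. Qed.

Lemma flip_inj n (x : cube n) : injective (flip x).
Proof.
move=> i j /ffunP /(_ i); rewrite !flipE eqxx; case: eqP => // _.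
by case: (x i).
Qed.

Lemma flipC n (x : cube n) i j : flip (flip x i) j = flip (flip x j) i.
Proof. by apply/ffunP=> k; rewrite !flipE; do 2 case: eqP => //. Qed.

Lemma adj_flip n (x : cube n) i : cube_adj x (flip x i).
Proof.
rewrite /cube_adj (_ : [set j | x j != flip x i j] = [set i]) ?cards1 //.
apply/setP=> j; rewrite !inE flipE; case: (eqVneq j i) => [->|ne].
  by case: (x i).
by rewrite eqxx.
Qed.

Lemma adjP n (x y : cube n) : cube_adj x y -> exists i, y = flip x i.
Proof.
rewrite /cube_adj => /cards1P [i Hi]; exists i; apply/ffunP=> j; rewrite flipE.
move/setP/(_ j): Hi; rewrite !inE.
case: (eqVneq j i) => [->|_]; first by case: (x i); case: (y i).
by move/negbT; rewrite negbK => /eqP.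
Qed.

Lemma deg_flip n (H : {set cube n}) b :
  ind_deg H b = #|[set i : 'I_n | flip b i \in H]|.
Proof.
rewrite /ind_deg -(card_imset _ (@flip_inj n b)).
suff -> : [set g in H | cube_adj b g] = flip b @: [set i | flip b i \in H] by [].
apply/setP=> g; rewrite !inE; apply/andP/imsetP.
  by case=> gH /adjP [i E]; exists i => //; rewrite inE -E.
by case=> i; rewrite inE => Hi ->; split; [exact: Hi | exact: adj_flip].
Qed.

Section S2.
Local Open Scope ring_scope.


Section Op.
Variable R : rcfType.

Definition sgn n (x : cube n) (i : 'I_n) : R := (-1) ^+ (\sum_(k < n | k < i) x k)%N.

Lemma sgn_other n (x : cube n) (i j : 'I_n) : ~~ (i < j)%N -> sgn (flip x i) j = sgn x j.
Proof.
move=> nij; rewrite /sgn; congr (_ ^+ _); apply: eq_bigr => k kj.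
rewrite flipE; case: (eqVneq k i) => // E; move: nij; by rewrite -E kj.
Qed.

Lemma sgn_lt n (x : cube n) (i j : 'I_n) : (i < j)%N -> sgn (flip x i) j = - sgn x j.
Proof.
move=> ij; rewrite /sgn (bigD1 i) //= [in RHS](bigD1 i) //= flipE eqxx.
have -> : (\sum_(k < n | (k < j)%N && (k != i)) flip x i k =
           \sum_(k < n | (k < j)%N && (k != i)) x k)%N.
  by apply: eq_bigr => k /andP [_ /negbTE ki]; rewrite flipE ki.
by case: (x i); rewrite !exprD ?expr1 ?expr0 ?mulN1r ?mul1r ?opprK.
Qed.

Lemma sgn_sq n (x : cube n) i : sgn x i * sgn x i = 1.
Proof. by rewrite /sgn -expr2 -exprM mulnC exprM sqrrN expr1n expr1n. Qed.

Definition Aop n (v : cube n -> R) (x : cube n) : R :=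
  \sum_i sgn x i * v (flip x i).

Lemma sum_antisym n (G : 'I_n -> 'I_n -> R) :
  (forall i j, G j i = - G i j) -> \sum_i \sum_j G i j = 0.
Proof.
move=> HG; set S := \sum_i _.
have : S = - S.
  rewrite {1}/S exchange_big /= -sumrN; apply: eq_bigr => j _.
  rewrite -sumrN; apply: eq_bigr => i _; exact: HG.
move=> E; lra.
Qed.

Lemma AopA n (v : cube n -> R) x : Aop (Aop v) x = n%:R * v x.
Proof.
rewrite /Aop.
under eq_bigr => i _ do rewrite mulr_sumr.
pose F i j := sgn x i * (sgn (flip x i) j * v (flip (flip x i) j)).
pose G i j := if j == i then 0 else F i j.
have HF : forall i, \sum_j F i j = v x + \sum_j G i j.
  move=> i; rewrite (bigD1 i) //= [X in _ = _ + X](bigD1 i) //= /G eqxx add0r.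
  congr (_ + _).
    by rewrite /F flipK sgn_other ?ltnn // mulrA sgn_sq mul1r.
  by apply: eq_bigr => j /negbTE ->.
rewrite (eq_bigr _ (fun i _ => HF i)) big_split /= sum_antisym ?addr0.
  by rewrite sumr_const card_ord mulr_natl.
move=> i j; rewrite /G eq_sym; case: (eqVneq i j) => [E|ne]; first by subst; rewrite ?eqxx oppr0.
rewrite /F flipC.
case: (ltngtP i j) => [ij|ji|/val_inj E]; last by rewrite E eqxx in ne.
  rewrite (sgn_lt x ij) (@sgn_other _ x j i); last by rewrite -leqNgt ltnW.
  ring.
rewrite (sgn_lt x ji) (@sgn_other _ x i j); last by rewrite -leqNgt ltnW.
ring.
Qed.

End Op.
Section Op2.
Variable R : rcfType.
Lemma Aop_ext n (f g : cube n -> R) x : (forall y, f y = g y) -> Aop f x = Aop g x.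
Proof. by move=> E; apply: eq_bigr => i _; rewrite E. Qed.
Lemma Aop_lin n a (u w : cube n -> R) x :
  Aop (fun y => a * u y + w y) x = a * Aop u x + Aop w x.
Proof. by rewrite /Aop mulr_sumr -big_split; apply: eq_bigr => i _ /=; ring. Qed.
End Op2.

End S2.
Section S3.
Local Open Scope ring_scope.


Section LA.
Variable R : rcfType.
Variable (n : nat) (H : {set cube n}) (top : 'I_n).
Definition S1 := {x : cube n | x \notin H}.
Definition S2 := {x : cube n | x top}.
Definition VV := {ffun cube n -> R^o}.
Definition WW := ({ffun S1 -> R^o} * {ffun S2 -> R^o})%type.
Lemma dimV : \dim (fullv : {vspace VV}) = (2 ^ n)%N.
Proof. by rewrite dimvf /dim /= card_ffun card_bool card_ord muln1. Qed.
Lemma dimF (I : finType) : dim {ffun I -> R^o} = #|I|.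
Proof. by rewrite /dim /= muln1. Qed.
Lemma dimW : \dim (fullv : {vspace WW}) = (#|{: S1}| + #|{: S2}|)%N.
Proof. by rewrite dimvf; exact: (congr2 addn (dimF _) (dimF _)). Qed.
Lemma cardS1 : #|{: S1}| = (2 ^ n - #|H|)%N.
Proof.
have := cardC H; rewrite card_ffun card_bool card_ord => <-; rewrite card_sig addKn.
by apply: eq_card => x; rewrite !inE.
Qed.
Lemma cardS2 : (#|{: S2}| * 2 = 2 ^ n)%N.
Proof.
have E1 : #|{: S2}| = #|[set x : cube n | x top]|.
  by rewrite card_sig; apply: eq_card => x; rewrite !inE.
have := cardsC [set x : cube n | x top]; rewrite card_ffun card_bool card_ord => <-.
rewrite E1 muln2 -addnn; congr addn.
have -> : ~: [set x : cube n | x top] = (fun x => flip x top) @: [set x : cube n | x top].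
  apply/setP=> x; rewrite !inE; apply/idP/imsetP.
    by move=> nx; exists (flip x top); rewrite ?flipK // inE flipE eqxx.
  by case=> y; rewrite inE => yt ->; rewrite flipE eqxx yt.
by rewrite card_imset //; apply: can_inj (flipK top).
Qed.

Variable lam : R.
Definition phi (u : VV) : WW :=
  ([ffun s : S1 => Aop (fun y => u y) (val s) + lam * u (val s)],
   [ffun s : S2 => u (val s)]).

Lemma phi_lin : linear phi.
Proof.
move=> a u w; rewrite /phi /=; congr pair; apply/ffunP => s; rewrite !ffunE //.
rewrite (@Aop_ext _ _ _ (fun y => a * u y + w y)); last by move=> y; rewrite !ffunE.
rewrite Aop_lin /= -[a *: u _]/(a * u _) -[a *: (_ + _)]/(a * (_ + _)); ring.
Qed.

Lemma exists_ker : (#|{: S1}| + #|{: S2}| < 2 ^ n)%N -> exists u : VV, u != 0 /\ phi u = 0.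
Proof.
move=> Hlt.
pose phiM := GRing.isLinear.Build _ _ _ _ phi phi_lin.
pose phiL : {linear _ -> _} := HB.pack phi phiM.
pose f := linfun phiL.
have E := limg_ker_dim f fullv; rewrite capfv dimV in E.
have Hle : (\dim (limg f) <= \dim (fullv : {vspace WW}))%N by apply: dimvS; apply: subvf.
rewrite dimW in Hle.
have pos : (0 < \dim (lker f))%N by lia.
exists (vpick (lker f)); split.
  rewrite vpick0; apply/eqP => E0; by rewrite E0 dimv0 in pos.
by have := memv_pick (lker f); rewrite memv_ker lfunE => /eqP.
Qed.
End LA.

End S3.
Section S4.
Local Open Scope ring_scope.


Section Main.
Variable R : rcfType.

Lemma argmax (T : finType) (x0 : T) (f : T -> R) : exists b, forall x, f x <= f b.
Proof.
case: (arg_maxP (i0:=x0) (P:=xpredT) f isT) => b _ Hb.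
by exists b => x; apply: Hb.
Qed.

Lemma main_R (n : nat) (hn : (1 <= n)%N) (H : {set cube n}) (hH : (2 ^ n.-1 < #|H|)%N) :
  exists2 b, b \in H & (n <= (ind_deg H b) ^ 2)%N.
Proof.
case: n hn H hH => // m _ H hH.
pose top : 'I_m.+1 := ord_max.
pose lam : R := Num.sqrt (m.+1)%:R.
have lam0 : 0 <= lam by apply: sqrtr_ge0.
have lam2 : lam ^+ 2 = (m.+1)%:R by rewrite sqr_sqrtr // ler0n.
have Hlt : (#|{: S1 H}| + #|{: S2 top}| < 2 ^ m.+1)%N.
  rewrite cardS1; have := cardS2 top; rewrite expnS.
  have := max_card H; rewrite card_ffun card_bool card_ord expnS /=.
  move: hH => /= hH; lia.
have [u [u0 phu]] := exists_ker lam Hlt.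
have uH : forall x, x \notin H -> Aop (fun y => u y) x + lam * u x = 0.
  move=> x xH; move: (congr1 fst phu) => /= /ffunP /(_ (exist _ x xH)).
  by rewrite !ffunE.
have ut : forall x : cube m.+1, x top -> u x = 0.
  move=> x xt; move: (congr1 snd phu) => /= /ffunP /(_ (exist _ x xt)).
  by rewrite !ffunE.
pose v x := Aop (fun y => u y) x + lam * u x.
have v0 : forall x, x \notin H -> v x = 0 by exact: uH.
have vE : forall x, Aop v x = lam * v x.
  move=> x; rewrite (@Aop_ext _ _ _ (fun y => lam * u y + Aop (fun y => u y) y)); last first.
    by move=> y; rewrite /v addrC.
  by rewrite Aop_lin AopA /v -lam2; ring.
have [y vy] : exists y, v y != 0.
  have [x ux] : exists x, u x != 0.
    apply/existsP; move: u0; apply: contraR; rewrite negb_exists => /forallP Hx.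
    by apply/eqP/ffunP => x; rewrite ffunE; apply/eqP; move: (Hx x); rewrite negbK.
  have xt : x top = false by apply/negbTE; apply: contra ux => /ut ->.
  exists (flip x top).
  have yt : flip x top top by rewrite flipE eqxx xt.
  rewrite /v ut // mulr0 addr0 /Aop (bigD1 top) //= flipK big1 ?addr0.
    by rewrite mulf_neq0 // signr_eq0.
  move=> i ni; rewrite ut ?mulr0 // flipE eq_sym (negbTE ni).
  exact: yt.
have [b Hb] := argmax y (fun x => `|v x|).
have vb0 : 0 < `|v b|.
  rewrite normr_gt0; apply: contraTneq (Hb y) => ->; rewrite normr0 -ltNge normr_gt0 //.
have bH : b \in H.
  by apply: contraLR (vb0) => /v0 ->; rewrite normr0 ltxx.
exists b => //.
rewrite deg_flip.
set d := #|[set i | flip b i \in H]|.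
have key : lam * `|v b| <= d%:R * `|v b|.
  have -> : lam * `|v b| = `|Aop v b| by rewrite vE normrM ger0_norm.
  rewrite /Aop.
  apply: le_trans (ler_norm_sum _ _ _) _.
  apply: (@le_trans _ _ (\sum_i (if flip b i \in H then `|v b| else 0))).
    apply: ler_sum => i _; rewrite normrM normr_sign mul1r.
    case: ifP => Hi; first exact: Hb.
    by rewrite v0 ?Hi // normr0.
  rewrite -big_mkcond /= sumr_const -mulr_natl /d mulr1 mulr_natl.
  by rewrite cardsE.
have ld : lam <= d%:R by rewrite -(ler_pM2r vb0).
have : (m.+1)%:R <= (d ^ 2)%:R :> R.
  rewrite -lam2 natrX; nra.
by rewrite ler_nat.
Qed.
End Main.

End S4.

Theorem mainTheorem3 (n : nat) (hn : 1 <= n) (H : {set cube n})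
    (hH : 2 ^ n.-1 < #|H|) :
  exists2 b, b \in H & n <= (ind_deg H b) ^ 2.
Proof. exact: (@main_R realalg n hn H hH). Qed.
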